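(* Let $\mathbf{C}$ be the Cantor set with a fixed compatible metric $\mathrm{dist}$, let $X \subset \mathbf{C}$, and let $f : X \to Y$ be a continuous clopen-LC function from $X$ onto $Y \subset \mathbf{C}$ such that $f^{-1}(y)$ is compact for every $y \in Y$. For $n = 1,2,\dots$, let $X_n$ be the union of all fibers $f^{-1}(y)$, $y \in Y$, for which there exist a sequence $y_k \to y$ in $Y$ with $y_k \neq y$ for all $k$ and $y_k \neq y_j$ for $k\ne j$, points $x_k \in f^{-1}(y_k)$, and a point $\tilde{x}_y \in \mathbf{C}$ with $x_k \to \tilde{x}_y$ and $\mathrm{dist}(\tilde{x}_y, f^{-1}(y)) > 1/n$; let $Y_n = f(X_n)$. Then for every $n \ge 1$ the restriction $g_n = f|_{f^{-1}(\mathrm{cl}_Y Y_n)} : f^{-1}(\mathrm{cl}_Y Y_n) \to \mathrm{cl}_Y Y_n$ is an open function.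
   Context: A subset of a topological space is an LC-set if it is the intersection of an open set and a closed set. A function is open if it maps open sets to open sets of its image space. A function $f : X \to Y$ is clopen-LC if for every subset $U \subset X$ that is clopen in $X$, the image $f(U)$ is an LC-set in $Y$. $\mathrm{cl}_Y$ denotes closure in $Y$. *)

(* Defs.v *)
(* the Cantor set is modelled as the product space nat -> bool
   (2^omega with the product topology); the metric is an arbitrary compatible one. *)
From Stdlib Require Import Reals List.
Open Scope R_scope.

Definition Cantor := nat -> bool.
Definition cset := Cantor -> Prop.

Definition agree (n : nat) (x y : Cantor) : Prop :=
  forall i, (i < n)%nat -> x i = y i.
Definition is_open (U : cset) : Prop :=
  forall x, U x -> exists n, forall y, agree n x y -> U y.
Definition is_closed (F : cset) : Prop := is_open (fun x => ~ F x).

Definition rel_open (S U : cset) : Prop :=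
  (forall x, U x -> S x) /\
  exists V, is_open V /\ forall x, U x <-> (S x /\ V x).
Definition rel_closed (S F : cset) : Prop :=
  (forall x, F x -> S x) /\
  exists G, is_closed G /\ forall x, F x <-> (S x /\ G x).

Definition LC_in (Y A : cset) : Prop :=
  exists O F, rel_open Y O /\ rel_closed Y F /\ forall y, A y <-> (O y /\ F y).

Definition image (f : Cantor -> Cantor) (A : cset) : cset :=
  fun y => exists x, A x /\ f x = y.
Definition preimage_in (X : cset) (f : Cantor -> Cantor) (B : cset) : cset :=
  fun x => X x /\ B (f x).
Definition fiber (X : cset) (f : Cantor -> Cantor) (y : Cantor) : cset :=
  fun x => X x /\ f x = y.

Definition continuous_on (X : cset) (f : Cantor -> Cantor) : Prop :=
  forall V, is_open V -> rel_open X (preimage_in X f V).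

Definition clopen_LC (X Y : cset) (f : Cantor -> Cantor) : Prop :=
  forall U, rel_open X U -> rel_closed X U -> LC_in Y (image f U).

Definition cantor_compact (K : cset) : Prop :=
  forall Ucal : cset -> Prop,
    (forall U, Ucal U -> is_open U) ->
    (forall x, K x -> exists U, Ucal U /\ U x) ->
    exists l : list cset, (forall U, In U l -> Ucal U) /\
      (forall x, K x -> exists U, In U l /\ U x).

Definition converges (s : nat -> Cantor) (l : Cantor) : Prop :=
  forall U, is_open U -> U l -> exists N, forall k, (N <= k)%nat -> U (s k).

Definition closure (A : cset) : cset :=
  fun x => forall U, is_open U -> U x -> exists a, U a /\ A a.

Definition clY (Y A : cset) : cset := fun y => Y y /\ closure A y.

Definition is_metric (d : Cantor -> Cantor -> R) : Prop :=
  (forall x y, 0 <= d x y) /\ (forall x y, d x y = 0 <-> x = y) /\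
  (forall x y, d x y = d y x) /\ (forall x y z, d x z <= d x y + d y z).
Definition metric_open (d : Cantor -> Cantor -> R) (U : cset) : Prop :=
  forall x, U x -> exists e, 0 < e /\ forall y, d x y < e -> U y.
Definition compatible (d : Cantor -> Cantor -> R) : Prop :=
  is_metric d /\ forall U, is_open U <-> metric_open d U.

Definition dist_set_gt (d : Cantor -> Cantor -> R) (p : Cantor) (A : cset) (r : R) : Prop :=
  exists s, r < s /\ forall a, A a -> s <= d p a.

Definition Xn (d : Cantor -> Cantor -> R) (X Y : cset) (f : Cantor -> Cantor) (n : nat) : cset :=
  fun x => exists y, Y y /\ fiber X f y x /\
    exists (ys xs : nat -> Cantor) (xt : Cantor),
      (forall k, Y (ys k)) /\ converges ys y /\
      (forall k, ys k <> y) /\ (forall k j, k <> j -> ys k <> ys j) /\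
      (forall k, fiber X f (ys k) (xs k)) /\
      converges xs xt /\ dist_set_gt d xt (fiber X f y) (/ INR n).

Definition Yn d X Y f n : cset := image f (Xn d X Y f n).

Definition open_map_on (D E : cset) (f : Cantor -> Cantor) : Prop :=
  forall U, rel_open D U -> rel_open E (image f U).

(* Main.v *)
Require Import Defs.
From Stdlib Require Import Reals List Lra Lia Classical ClassicalEpsilon Arith.
Open Scope R_scope.

Lemma agree_refl L x : agree L x x. Proof. intros i _; reflexivity. Qed.
Lemma agree_sym L x y : agree L x y -> agree L y x. Proof. intros H i Hi; symmetry; auto. Qed.
Lemma agree_trans L x y z : agree L x y -> agree L y z -> agree L x z.
Proof. intros H1 H2 i Hi; rewrite H1; auto. Qed.
Lemma agree_le m L x y : (m <= L)%nat -> agree L x y -> agree m x y.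
Proof. intros Hm H i Hi; apply H; lia. Qed.

Lemma cyl_open L z : is_open (fun w => agree L z w).
Proof. intros x Hx; exists L; intros y Hy; eapply agree_trans; eauto. Qed.
Lemma cyl_copen L z : is_open (fun w => ~ agree L z w).
Proof. intros x Hx; exists L; intros y Hy Hz; apply Hx; eapply agree_trans; [exact Hz| apply agree_sym; exact Hy]. Qed.
Lemma open_and P Q : is_open P -> is_open Q -> is_open (fun w => P w /\ Q w).
Proof. intros HP HQ x [Px Qx]. destruct (HP x Px) as [a Ha]; destruct (HQ x Qx) as [b Hb].
 exists (Nat.max a b); intros y Hy; split; [apply Ha|apply Hb]; apply (agree_le _ (Nat.max a b)); auto; lia. Qed.
Lemma open_or P Q : is_open P -> is_open Q -> is_open (fun w => P w \/ Q w).
Proof. intros HP HQ x [Px|Qx].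
 - destruct (HP x Px) as [a Ha]; exists a; intros y Hy; left; auto.
 - destruct (HQ x Qx) as [a Ha]; exists a; intros y Hy; right; auto. Qed.
Lemma open_ext P Q : (forall w, P w <-> Q w) -> is_open P -> is_open Q.
Proof. intros He HP x Qx. destruct (HP x (proj2 (He x) Qx)) as [a Ha]; exists a; intros y Hy; apply He; auto. Qed.

Definition good (p : nat -> Cantor) L z := forall N, exists m, (N <= m)%nat /\ agree L z (p m).
Definition upd (z : Cantor) (L : nat) (b : bool) : Cantor := fun i => if Nat.eqb i L then b else z i.
Fixpoint zs (p : nat -> Cantor) L : Cantor :=
  match L with O => p O
  | S L' => if excluded_middle_informative (good p (S L') (upd (zs p L') L' true))
            then upd (zs p L') L' true else upd (zs p L') L' false end.

Lemma agree_upd L z w b : agree L z w -> w L = b -> agree (S L) (upd z L b) w.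
Proof. intros H Hb i Hi; unfold upd. destruct (Nat.eqb_spec i L). subst; auto. apply H; lia. Qed.

Lemma zs_good p L : good p L (zs p L).
Proof.
 induction L; simpl.
 - intros N; exists N; split; [lia| intros i Hi; exfalso; lia].
 - destruct (excluded_middle_informative _) as [Hg|Hg]; [exact Hg|].
   intros N.
   apply not_all_ex_not in Hg. destruct Hg as [N0 HN0].
   destruct (IHL (Nat.max N N0)) as [m [Hm Ha]].
   exists m; split; [lia|].
   apply agree_upd; auto.
   destruct (p m L) eqn:E; auto.
   exfalso; apply HN0; exists m; split; [lia|]. apply agree_upd; auto.
Qed.

Lemma zs_stable p i L : (i < L)%nat -> zs p L i = zs p (S i) i.
Proof.
 induction L; intros Hi; [lia|].
 destruct (Nat.eq_dec i L) as [->|Hne]; [reflexivity|].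
 rewrite <- IHL by lia. simpl.
 destruct (excluded_middle_informative _); unfold upd;
 destruct (Nat.eqb_spec i L); try lia; reflexivity.
Qed.

Lemma konig (p : nat -> Cantor) : exists z, forall L N, exists m, (N <= m)%nat /\ agree L z (p m).
Proof.
 exists (fun i => zs p (S i) i). intros L N.
 destruct (zs_good p L N) as [m [Hm Ha]]. exists m; split; auto.
 intros i Hi. rewrite <- (Ha i Hi). symmetry; apply zs_stable; auto.
Qed.

Theorem lemma3 (d : Cantor -> Cantor -> R) (Hd : compatible d)
  (X Y : cset) (f : Cantor -> Cantor)
  (Hmap : forall x, X x -> Y (f x))
  (Honto : forall y, Y y -> exists x, X x /\ f x = y)
  (Hcont : continuous_on X f) (Hclp : clopen_LC X Y f)
  (Hcpt : forall y, Y y -> cantor_compact (fiber X f y))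
  (n : nat) (Hn : (1 <= n)%nat) :
  open_map_on (preimage_in X f (clY Y (Yn d X Y f n)))
              (clY Y (Yn d X Y f n)) f.
Proof.
  destruct Hd as [[Hd0 [Hdeq [Hdsym Hdtri]]] Hcomp].
  intros U [HUD [W [HW HUW]]].
  split.
  { intros y [x [Ux <-]]. destruct (HUD x Ux) as [_ HE]. exact HE. }
  exists (fun y => exists L, forall y', agree L y y' -> clY Y (Yn d X Y f n) y' -> image f U y').
  split.
  { intros y [L HL]. exists L. intros y2 H2. exists L. intros y' H' HE'. apply HL; auto. eapply agree_trans; eauto. }
  intros y; split.
  2:{ intros [HE [L HL]]. apply HL; auto. apply agree_refl. }
  intros Hy. split. { destruct Hy as [x [Ux <-]]. exact (proj2 (HUD x Ux)). }
  destruct Hy as [x [Ux Hfx]].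
  apply NNPP; intro Hno.
  assert (Hbad : forall L, exists y', agree L y y' /\ clY Y (Yn d X Y f n) y' /\ ~ image f U y').
  { intro L; apply NNPP; intro H; apply Hno; exists L; intros y' H1 H2; apply NNPP; intro H3; apply H; eauto. }
  clear Hno.
  destruct (proj1 (HUW x) Ux) as [[Xx HEx] Wx].
  destruct (HW x Wx) as [m0 Hm0].
  set (Vset := fun w => X w /\ agree m0 x w).
  destruct (Hclp Vset) as [O1 [F1 [HO1 [HF1 HOF1]]]].
  { split; [intros w [Xw _]; auto|]. exists (fun w => agree m0 x w); split; [apply cyl_open| intros w; unfold Vset; tauto]. }
  { split; [intros w [Xw _]; auto|]. exists (fun w => agree m0 x w); split; [exact (cyl_copen m0 x)| intros w; unfold Vset; tauto]. }
  assert (HyV : image f Vset y) by (exists x; split; [split; [auto|apply agree_refl]|auto]).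
  destruct (proj1 (HOF1 y) HyV) as [O1y _].
  destruct HO1 as [_ [G1 [HG1 HG1e]]].
  destruct (proj1 (HG1e y) O1y) as [Yy G1y].
  destruct (HG1 y G1y) as [L0 HL0].
  destruct HF1 as [_ [H1 [HH1 HH1e]]].
  assert (Hq : forall L, exists q, agree L y q /\ Yn d X Y f n q /\ ~ image f Vset q).
  { intro L. destruct (Hbad (Nat.max L L0)) as [e [Hae [HEe Hne]]].
    assert (Hnv : ~ image f Vset e).
    { intros [w [[Xw Aw] Hfw]]. apply Hne. exists w; split; auto.
      apply HUW; split. split; auto. rewrite Hfw; auto. apply Hm0; auto. }
    destruct HEe as [Ye Hcl].
    assert (O1e : O1 e). { apply HG1e; split; auto. apply HL0. eapply agree_le; [|exact Hae]. lia. }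
    assert (nH1 : ~ H1 e). { intro Hh. apply Hnv. apply HOF1; split; auto. apply HH1e; auto. }
    destruct (HH1 e nH1) as [M HM].
    destruct (Hcl (fun w => agree (Nat.max M (Nat.max L L0)) e w) (cyl_open _ _) (agree_refl _ _)) as [q [Hqa Hyn]].
    exists q. split; [|split; auto].
    - apply agree_trans with e; [apply (agree_le _ (Nat.max L L0)) | apply (agree_le _ (Nat.max M (Nat.max L L0)))]; auto; lia.
    - intro Hi. destruct (proj1 (HOF1 q) Hi) as [_ Fq]. destruct (proj1 (HH1e q) Fq) as [_ Hq1].
      apply (HM q); auto. apply (agree_le _ (Nat.max M (Nat.max L L0))); auto; lia. }
  assert (HYn : forall q, Yn d X Y f n q -> Y q).
  { intros q [w [[y0 [Yy0 [[_ Hf] _]]] Hfw]]. congruence. }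
  assert (Hx : forall L, exists qx : Cantor * Cantor, agree L y (fst qx) /\ Yn d X Y f n (fst qx) /\ ~ image f Vset (fst qx) /\
     (exists ys xs, (forall k, Y (ys k)) /\ converges ys (fst qx) /\ (forall k, fiber X f (ys k) (xs k)) /\ converges xs (snd qx)) /\
     dist_set_gt d (snd qx) (fiber X f (fst qx)) (/ INR n)).
  { intro L. destruct (Hq L) as [q [Hqa [Hqy Hqn]]].
    pose proof Hqy as [w [[y0 [Yy0 [[_ Hf] [ys [xs [xt [H1' [H2' [_ [_ [H5 [H6 H7]]]]]]]]]]]] Hfw]].
    assert (Hy0 : y0 = q) by congruence. rewrite Hy0 in *.
    exists (q, xt); simpl; split;[|split;[|split;[|split]]]; auto. exists ys, xs; auto. }
  set (qx := fun L => proj1_sig (constructive_indefinite_description _ (Hx L))).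
  assert (Hqx : forall L, _) by (intro L; exact (proj2_sig (constructive_indefinite_description _ (Hx L)))).
  destruct (konig (fun L => snd (qx L))) as [z Hz].
  assert (Hnpos : 0 < INR n) by (apply lt_0_INR; lia).
  assert (Hball : is_open (fun w => d z w < / (2 * INR n))).
  { apply Hcomp. intros w Hw. exists (/(2*INR n) - d z w). split; [lra|]. intros y' Hy'. pose proof (Hdtri z w y'); lra. }
  destruct (Hball z) as [L1 HL1].
  { rewrite (proj2 (Hdeq z z) eq_refl). apply Rinv_0_lt_compat; lra. }
  set (A := fun w => X w /\ (agree m0 x w \/ agree L1 z w)).
  destruct (Hclp A) as [O2 [F2 [HO2 [HF2 HOF2]]]].
  { split; [intros w [Xw _]; auto|]. exists (fun w => agree m0 x w \/ agree L1 z w); split; [apply open_or; apply cyl_open| intros w; unfold A; tauto]. }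
  { split; [intros w [Xw _]; auto|]. exists (fun w => agree m0 x w \/ agree L1 z w); split.
    - unfold is_closed. eapply open_ext; [|apply (open_and _ _ (cyl_copen m0 x) (cyl_copen L1 z))]. intro w; simpl; tauto.
    - intros w; unfold A; tauto. }
  assert (HyA : image f A y) by (exists x; split; [split; [auto|left; apply agree_refl]|auto]).
  destruct (proj1 (HOF2 y) HyA) as [O2y _].
  destruct HO2 as [_ [G2 [HG2 HG2e]]].
  destruct (proj1 (HG2e y) O2y) as [_ G2y].
  destruct (HG2 y G2y) as [L2 HL2].
  destruct HF2 as [_ [H2 [HH2 HH2e]]].
  destruct (Hz L1 L2) as [m [Hm Hzm]].
  destruct (Hqx m) as [Hqa [Hqy [Hqn [[ys [xs [Hys [Hcys [Hfib Hcxs]]]]] [s [Hs Hsa]]]]]].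
  fold (qx m) in *.
  set (q := fst (qx m)) in *. set (xt := snd (qx m)) in *.
  assert (Yq : Y q) by (apply HYn; auto).
  assert (O2q : O2 q). { apply HG2e; split; auto. apply HL2. eapply agree_le; eauto. }
  assert (H2q : H2 q).
  { apply NNPP; intro nH. destruct (HH2 q nH) as [M HM].
    destruct (Hcys _ (cyl_open M q) (agree_refl _ _)) as [N1 HN1].
    destruct (Hcxs _ (cyl_open L1 z) Hzm) as [N2 HN2].
    destruct (Hfib (Nat.max N1 N2)) as [Xk Hfk].
    assert (HA : image f A (ys (Nat.max N1 N2))).
    { exists (xs (Nat.max N1 N2)); split; auto. split; auto. right; apply HN2; lia. }
    destruct (proj1 (HOF2 _) HA) as [_ HF]. destruct (proj1 (HH2e _) HF) as [_ HH].
    apply (HM _ (HN1 (Nat.max N1 N2) (Nat.le_max_l _ _))); auto. }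
  destruct (proj2 (HOF2 q) (conj O2q (proj2 (HH2e q) (conj Yq H2q)))) as [a [[Xa [Ha1|Ha2]] Hfa]].
  - apply Hqn. exists a; split; [split|]; auto.
  - pose proof (Hsa a (conj Xa Hfa)) as Hsd.
    pose proof (HL1 a Ha2) as Hza. pose proof (HL1 xt Hzm) as Hzx.
    pose proof (Hdtri xt z a) as Ht. rewrite (Hdsym xt z) in Ht.
    assert (2 * / (2 * INR n) = / INR n) by (field; lra).
    lra.
Qed.
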